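(* Let $n,d$ be positive integers and let $\vec{G}$ be a digraph of order $n$ with minimum outdegree $\delta^+(\vec{G})\ge d$. Then $\vec{G}$ contains a subdigraph $\vec{H}$ such that (i) $\delta^+(\vec{H})> d/2$; (ii) $\kappa_{\vec{H}}(x,y)\ge d^2/(4n)$ for all pairs of vertices $x,y\in V(\vec{H})$ with $d^-_{\vec{H}}(y)\ge d/2$; (iii) at least $d^2/(4n)$ vertices of $\vec{H}$ have indegree at least $d/2$ in $\vec{H}$.
   Context: Digraphs have no loops, and for any ordered pair of vertices $x,y$ there is at most one edge directed from $x$ to $y$ (there may also be an edge from $y$ to $x$). $\delta^+(\vec{G})$ denotes the minimum outdegree of $\vec{G}$ and $d^-_{\vec{H}}(y)$ the indegree of $y$ in $\vec{H}$. For vertices $x,y$ of a digraph $\vec{G}$, $\kappa_{\vec{G}}(x,y)$ is defined as the largest integer $k$ with $1\le k\le |\vec{G}|-2$ such that for every vertex set $S\subseteq V(\vec{G})\setminus\{x,y\}$ with $|S|<k$, the digraph $\vec{G}-S$ contains a directed path from $x$ to $y$; and $\kappa_{\vec{G}}(x,y):=0$ if $\vec{G}$ contains no directed path from $x$ to $y$. *)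

(* Defs.v *)
From mathcomp Require Import all_boot all_order.
Set Implicit Arguments. Unset Strict Implicit. Unset Printing Implicit Defensive.

(* A digraph on a finite vertex type V is an edge relation e : rel V
   (e x y = there is an edge directed from x to y); "no loops" is irreflexivity.
   At most one edge per ordered pair is automatic for a relation. *)
Definition digraph (V : finType) (e : rel V) : Prop := irreflexive e.

Definition outdeg (V : finType) (S : {set V}) (f : rel V) (x : V) : nat :=
  #|[set y in S | f x y]|.
Definition indeg (V : finType) (S : {set V}) (f : rel V) (y : V) : nat :=
  #|[set x in S | f x y]|.

Definition subdigraph (V : finType) (e : rel V) (S : {set V}) (f : rel V) : Prop :=
  forall x y, f x y -> [&& x \in S, y \in S & e x y].

Definition dpath_avoid (V : finType) (f : rel V) (T : {set V}) (x y : V) : bool :=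
  connect [rel u v | [&& f u v, u \notin T & v \notin T]] x y.

Definition kappa_ok (V : finType) (S : {set V}) (f : rel V) (x y : V) (k : nat) : bool :=
  [forall T : {set V}, (T \subset S :\ x :\ y) ==> (#|T| < k) ==> dpath_avoid f T x y].

(* local connectivity kappa_(S,f)(x,y): largest k with 1 <= k <= |S|-2 that is
   admissible; 0 if there is no x->y path.  (Convention when |S| <= 2 and a path
   exists: the range is taken as 1 <= k <= max(1, |S|-2), giving value 1.) *)
Definition kappa (V : finType) (S : {set V}) (f : rel V) (x y : V) : nat :=
  if ~~ dpath_avoid f set0 x y then 0
  else \max_(1 <= k < (maxn 1 (#|S| - 2)).+1 | kappa_ok S f x y k) k.

(* Main.v *)
Require Import Defs.
From mathcomp Require Import all_boot all_order.
From mathcomp Require Import zify.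
Set Implicit Arguments. Unset Strict Implicit. Unset Printing Implicit Defensive.

Definition od (V : finType) (e : rel V) (U : {set V}) u := #|[set v in U | e u v]|.
Definition idg (V : finType) (e : rel V) (U : {set V}) u := #|[set v in U | e v u]|.
Definition fU (V : finType) (e : rel V) (U : {set V}) : rel V :=
  [rel a b | [&& a \in U, b \in U & e a b]].

Lemma card_sum (V : finType) (U : {set V}) (p : pred V) :
  #|[set v in U | p v]| = \sum_(v in U) (p v : nat).
Proof.
rewrite -sum1_card [LHS]big_mkcond [RHS]big_mkcond /=.
by apply: eq_bigr => v _; rewrite inE; case: (v \in U); case: (p v).
Qed.

Lemma sum_od (V : finType) (e : rel V) (U : {set V}) :
  \sum_(u in U) od e U u = \sum_(u in U) idg e U u.
Proof.
rewrite /od /idg.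
under eq_bigr do rewrite card_sum.
under [RHS]eq_bigr do rewrite card_sum.
exact: exchange_big.
Qed.

Lemma od_lt (V : finType) (e : rel V) (U : {set V}) u :
  irreflexive e -> u \in U -> od e U u < #|U|.
Proof.
move=> irr uU; apply: proper_card; apply/properP; split.
  by apply/subsetP=> v; rewrite inE => /andP[].
by exists u => //; rewrite inE irr andbF.
Qed.

Lemma idg_le (V : finType) (e : rel V) (U : {set V}) u : idg e U u <= #|U|.
Proof. by apply: subset_leq_card; apply/subsetP=> v; rewrite inE => /andP[]. Qed.

Theorem lemma4 (V : finType) (e : rel V) (n d : nat) :
  0 < n -> 0 < d -> digraph e -> #|V| = n ->
  (forall v : V, d <= outdeg [set: V] e v) ->
  exists (S : {set V}) (f : rel V),
    subdigraph e S f /\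
    (forall x, x \in S -> d < 2 * outdeg S f x) /\
    (forall x y, x \in S -> y \in S -> d <= 2 * indeg S f y ->
       d ^ 2 <= 4 * n * kappa S f x y) /\
    d ^ 2 <= 4 * n * #|[set y in S | d <= 2 * indeg S f y]|.
Proof.
move=> n0 d0 irr cardV hod.
have [v0 _] : exists v : V, v \in V.
  by apply/card_gt0P; rewrite cardV.
have hdn : d < n.
  apply: leq_ltn_trans (hod v0) _; rewrite -cardV -cardsT; exact: od_lt.
pose P (U : {set V}) := (U != set0) &&
  [forall u in U, 2*n*d + d*#|U| <= 2*n*od e U u + d*n].
have PT : P [set: V].
  apply/andP; split; first by apply/set0Pn; exists v0; rewrite inE.
  apply/forall_inP => u _; rewrite cardsT cardV.
  have := hod u; rewrite /outdeg -/(od e _ u) => h; nia.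
case: (arg_minnP (fun U : {set V} => #|U|) PT) => U /andP[Un0 /forall_inP hU] minU.
have U0 : 0 < #|U| by rewrite card_gt0.
have outE : forall x, x \in U -> outdeg U (fU e U) x = od e U x.
  move=> x xU; rewrite /outdeg /od; apply: eq_card => v; rewrite !inE /fU /= xU; by case: (v \in U).
have inE' : forall y, y \in U -> indeg U (fU e U) y = idg e U y.
  move=> y yU; rewrite /indeg /idg; apply: eq_card => v; rewrite !inE /fU /= yU.
  by case: (v \in U).
have hi : forall x, x \in U -> d < 2 * od e U x.
  move=> x xU; have := hU x xU; nia.
exists U, (fU e U); split.
  by move=> x y /= /and3P[-> -> ->].
split; first by move=> x xU; rewrite outE //; exact: hi.
split.
move=> x y xU yU; rewrite inE' // => hy.
have h4 : 0 < 4*n by lia.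
have [k0 [hk1 hk2]] : exists k, d*d <= 4*n*k /\ 4*n*k < d*d + 4*n.
  move: (divn_eq (d*d) (4*n)) (ltn_pmod (d*d) h4).
  move: (d*d %/ (4*n)) => q; move: (d*d %% (4*n)) => r h1 h2.
  by case: (posnP r) => [r0|rp]; [exists q | exists q.+1]; lia.
have adm : forall T : {set V}, T \subset U :\ x :\ y -> #|T| < k0 -> dpath_avoid (fU e U) T x y.
  move=> T sT hT; apply/negPn/negP => np.
  have xT : x \notin T by apply/negP => /(subsetP sT); rewrite !inE eqxx /= andbF.
  have yT : y \notin T by apply/negP => /(subsetP sT); rewrite !inE eqxx.
  pose A := [set v in U | (v \notin T) && dpath_avoid (fU e U) T x v].
  have xA : x \in A by rewrite inE xU xT; exact: connect0.
  have yA : y \notin A by rewrite inE (negbTE np) !andbF.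
  have cl : forall u v, u \in A -> v \in U -> v \notin T -> e u v -> v \in A.
    move=> u v; rewrite inE => /and3P[uU uT hu] vU vT euv.
    rewrite inE vU vT /=; apply: (connect_trans hu); apply: connect1.
    by rewrite /= /fU /= uU vU euv uT vT.
  have AU : A \subset U by apply/subsetP => v; rewrite inE => /andP[].
  have odA : forall u, u \in A -> od e U u <= od e A u + #|T|.
    move=> u uA; rewrite /od.
    have sub : [set v in U | e u v] \subset [set v in A | e u v] :|: T.
      apply/subsetP => v; rewrite in_setU !in_set => /andP[vU euv].
      case vT: (v \in T); rewrite ?orbT //= orbF.
      by move: (cl u v uA vU (negbT vT) euv); rewrite in_set vT /= euv andbT.
    by apply: leq_trans (subset_leq_card sub) _; rewrite cardsU leq_subr.
  have D : idg e U y + 1 <= #|U :\: A|.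
    have : y |: [set v in U | e v y] \subset U :\: A.
      apply/subsetP => v; rewrite in_setU1 in_setD in_set => /orP[/eqP->| /andP[vU evy]].
        by rewrite yA yU.
      rewrite vU andbT; apply/negP => vA; by move: yA; rewrite (cl v y).
    move/subset_leq_card; rewrite cardsU1 in_set irr andbF /= /idg; clear; lia.
  have cardA := cardsID A U; rewrite (setIidPr AU) in cardA.
  have PA : P A.
    apply/andP; split; first by apply/set0Pn; exists x.
    apply/forall_inP => u uA.
    have h0 := hU u (subsetP AU u uA); have h1 := odA u uA.
    have h2 : 2*n*od e U u <= 2*n*(od e A u + #|T|) by rewrite leq_mul2l h1 orbT.
    have h3 : 4*n*(#|T|+1) <= 4*n*k0 by rewrite leq_mul2l addn1 hT orbT.
    have h5 : d*(d+2) <= d*(2*#|U :\: A|) by rewrite leq_mul2l; apply/orP; right; clear -hy D; lia.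
    have e1 : d*#|U| = d*#|A| + d*#|U:\:A| by rewrite -cardA mulnDr.
    clear -h0 h2 h3 h5 e1 hk2 hy D hT; lia.
  have := minU A PA; clear -cardA D; lia.
have hk0 : 0 < k0.
  rewrite lt0n; apply/eqP => k00; move: hk1; rewrite k00 muln0 leqn0 muln_eq0 orbb => /eqP; lia.
have p0 : dpath_avoid (fU e U) set0 x y by apply: adm; rewrite ?sub0set ?cards0.
have okk : kappa_ok U (fU e U) x y k0.
  by apply/forallP => T; apply/implyP => sT; apply/implyP => hT; exact: adm.
have rng : k0 <= maxn 1 (#|U| - 2).
  rewrite leq_max; case: (leqP k0 1) => //= hk.
  have h8 := hi x xU; have h9 := od_lt irr xU.
  have [k1 ek] : exists k1, k0 = k1.+1 by exists k0.-1; rewrite prednK.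
  rewrite ek in hk hk2 *.
  have h6 : 4*(d+1)*k1 <= 4*n*k1 by rewrite leq_mul2r; apply/orP; right; clear -hdn; lia.
  have hk2' : 4*n*k1 < d*d by clear -hk2; lia.
  have h7 : 4*k1 < d.
    rewrite ltnNge; apply/negP => h; have : (d+1)*d <= (d+1)*(4*k1) by rewrite leq_mul2l h orbT.
    clear -h6 hk2'; lia.
  clear -h7 hk h8 h9; lia.
rewrite /kappa p0 /=.
rewrite (_ : d ^ 2 = d * d); last by rewrite mulnn.
apply: leq_trans hk1 _; rewrite leq_mul2l; apply/orP; right.
apply: (@leq_bigmax_seq _ _ _ (fun k => k) k0) => //.
rewrite mem_index_iota; lia.
have -> : [set y in U | d <= 2 * indeg U (fU e U) y] = [set y in U | d <= 2 * idg e U y].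
  by apply/setP => y; rewrite !inE; case yU: (y \in U) => //=; rewrite inE'.
set m := #|[set y in U | d <= 2 * idg e U y]|.
have s1 : \sum_(u in U) (2*n*d + d*#|U|) <= \sum_(u in U) (2*n*od e U u + d*n).
  by apply: leq_sum => u uU; exact: hU.
rewrite sum_nat_const big_split /= -big_distrr /= sum_nat_const sum_od in s1.
have s2 : \sum_(u in U) (2 * idg e U u) <= \sum_(u in U) (2*#|U| * (d <= 2 * idg e U u) + d).
  apply: leq_sum => u uU; have := idg_le e U u.
  by case: (leqP d (2 * idg e U u)) => h /=; nia.
rewrite -big_distrr big_split /= -big_distrr sum_nat_const /= -card_sum -/m in s2.
set X := \sum_(u in U) idg e U u in s1 s2.
have s3 : #|U| * (d * #|U|) <= #|U| * (2*n*m) by nia.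
rewrite leq_pmul2l // in s3.
have [x0 x0U] : exists x, x \in U by apply/set0Pn.
have := hi x0 x0U; have := od_lt irr x0U => h8 h9.
have : d*d <= d*(2*#|U|) by rewrite leq_mul2l; apply/orP; right; lia.
lia.
Qed.
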